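(* Let $0<\alpha<1$ and $\sigma=1-\alpha/2$. Then for every integer $s\ge1$, $$b_s^{(\alpha,\sigma)}:=\frac{1}{2-\alpha}\big[(s+\sigma)^{2-\alpha}-(s-1+\sigma)^{2-\alpha}\big]-\frac12\big[(s+\sigma)^{1-\alpha}+(s-1+\sigma)^{1-\alpha}\big]>0.$$ *)

(* Defs.v *)
From Stdlib Require Import Reals.
Open Scope R_scope.

(* b_s^{(alpha,sigma)} from the paper; all bases s+sigma, s-1+sigma are > 0
   in the theorem's range, so Rpower (= exp (y * ln x)) is the usual power. *)
Definition b_coef (alpha sigma : R) (s : nat) : R :=
  / (2 - alpha) * (Rpower (INR s + sigma) (2 - alpha)
                   - Rpower (INR s - 1 + sigma) (2 - alpha))
  - / 2 * (Rpower (INR s + sigma) (1 - alpha)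
           + Rpower (INR s - 1 + sigma) (1 - alpha)).

(* Main.v *)
Require Import Defs.
From Stdlib Require Import Reals Lra.
From Coquelicot Require Import Coquelicot.
Open Scope R_scope.

Definition E (b x : R) := exp (b * ln x).

Lemma k_pos (a b t : R) : 0 < a -> 0 < b < 1 -> 0 < t ->
  E b (a + t) - E b a - t * (b * E b (a + t) / (a + t)) > 0.
Proof.
  intros Ha Hb Ht.
  set (k := fun u => E b (a + u) - E b a - u * (b * E b (a + u) / (a + u))).
  set (k' := fun u => - u * b * (b - 1) * E b (a + u) / ((a + u) * (a + u))).
  destruct (MVT_cor2 k k' 0 t Ht) as [c [Hc Hc2]].
  { intros c Hc. apply is_derive_Reals. unfold k, k', E. clear k k'.
    auto_derive. { repeat split; lra. }
    field. lra. }
  unfold k in Hc. replace (E b (a+0) - E b a - 0 * _) with 0 in Hc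
    by (rewrite Rplus_0_r; ring).
  change (k t > 0). unfold k'.
  assert (HE: 0 < E b (a + c)) by apply exp_pos.
  assert (k' c > 0).
  { unfold k'. unfold Rdiv. apply Rmult_gt_0_compat.
    - replace (- c * b * (b - 1) * E b (a + c)) with (c * b * (1 - b) * E b (a + c)) by ring.
      repeat apply Rmult_gt_0_compat; lra.
    - apply Rinv_0_lt_compat. apply Rmult_gt_0_compat; lra. }
  unfold k in *. nra.
Qed.

Lemma h_pos (a b : R) : 0 < a -> 0 < b < 1 ->
  / (1 + b) * (exp ((1 + b) * ln (a + 1)) - exp ((1 + b) * ln a))
  - / 2 * (E b (a + 1) + E b a) > 0.
Proof.
  intros Ha Hb.
  set (h := fun u => exp ((1 + b) * ln (a + u)) / (1 + b) - u / 2 * (E b (a + u) + E b a)).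
  set (h' := fun u => / 2 * (E b (a + u) - E b a - u * (b * E b (a + u) / (a + u)))).
  destruct (MVT_cor2 h h' 0 1 Rlt_0_1) as [c [Hc Hc2]].
  { intros c Hc. apply is_derive_Reals. unfold h, h', E. clear h h'.
    auto_derive. { repeat split; lra. }
    assert (exp ((1 + b) * ln (a + c)) = (a + c) * exp (b * ln (a + c))) as ->.
    { replace ((1 + b) * ln (a + c)) with (ln (a + c) + b * ln (a + c)) by ring.
      rewrite exp_plus, exp_ln; lra. }
    field. lra. }
  assert (h' c > 0).
  { unfold h'. pose proof (k_pos a b c Ha Hb ltac:(lra)). lra. }
  unfold h in Hc. rewrite Rplus_0_r in Hc.
  replace (/ (1 + b) * (exp ((1 + b) * ln (a + 1)) - exp ((1 + b) * ln a))
   - / 2 * (E b (a + 1) + E b a)) with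
   (exp ((1 + b) * ln (a + 1)) / (1 + b) - 1 / 2 * (E b (a + 1) + E b a) -
       (exp ((1 + b) * ln a) / (1 + b) - 0 / 2 * (E b a + E b a))) by (field; lra).
  rewrite Hc. nra.
Qed.

Theorem corollary2 (alpha : R) (s : nat) :
  0 < alpha -> alpha < 1 -> (1 <= s)%nat ->
  b_coef alpha (1 - alpha / 2) s > 0.
Proof.
  intros H0 H1 Hs.
  assert (Hs' : 1 <= INR s) by (apply (le_INR 1); exact Hs).
  set (a := INR s - 1 + (1 - alpha / 2)).
  assert (Ha : 0 < a) by (unfold a; lra).
  pose proof (h_pos a (1 - alpha) Ha ltac:(lra)) as H.
  unfold b_coef, Rpower, E in *.
  replace (INR s + (1 - alpha / 2)) with (a + 1) by (unfold a; ring).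
  replace (2 - alpha) with (1 + (1 - alpha)) by ring.
  fold a. exact H.
Qed.
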